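(* Let $\mathcal{M}=(x,p)$ be any mechanism. Suppose that for every agent $k$ we have coefficients $W^k_{i,j}\in[-1,1]$ ($i,j\in[m_k]$) and $\varepsilon'\ge\varepsilon''\ge0$ such that $W^k_{i,i}\ge\max\{W^k_{i,j}-\varepsilon',-\varepsilon''\}$ for all $k,i,j$. For each $k$ let $\hat q^*$ be an optimal solution of $(P^4)$ (built from $W^k$) and $(\hat\lambda^*,\hat\mu^*,\hat\pi^* )$ Lagrange multipliers satisfying its KKT conditions, and let $\lambda^*_{i,j}=\hat\lambda^*_{i,j}$ if $W^k_{i,j}\ge-m(\varepsilon'+2\gamma)-\varepsilon''$ and $\lambda^*_{i,j}=\hat\lambda^*_{i,j}+F_i(W^k_{i,j}+m(\varepsilon'+2\gamma)+\varepsilon'')$ otherwise (so that $(\lambda^*,\hat\mu^*,\hat\pi^* )$ satisfies the KKT conditions of $(P^3)$ at $\hat q^*$). Let $\mathcal{M}'$ be the RRSF mechanism with $q^*=\hat q^*$ and multipliers $(\lambda^*,\mu^*=\hat\mu^*,\pi^*=\hat\pi^* )$ for every agent. Then for every agent $k$ and $i\in[m_k]$, $$\hat p_k(t_k^{(i)})=\sum_j\pi^*_jq^*_{i,j}+\phi(\mathbf{q}^*_i)-\phi(\mathbf{0})+\min_\ell\frac{\mu^*_\ell}{F_\ell}\ge-m(\varepsilon'+2\gamma)-\varepsilon''-\gamma,$$ and consequently $\mathrm{Rev}(\mathcal{M}')\ge\mathrm{Rev}(\mathcal{M})-n\big(m(\varepsilon'+2\gamma)+\varepsilon''+\gamma\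big)$.
   Context: Setting: $n$ agents, general outcome set $\mathcal{O}$; agent $k$'s type is drawn independently from $\mathcal{D}_k$ with support $\{t_k^{(1)},\dots,t_k^{(m_k)}\}$ and probabilities $F_i=F_i^k>0$; $m=\max_km_k$; valuations in $[0,1]$. A mechanism $(x,p)$ maps bid profiles to outcome distributions and payments; $\mathrm{Rev}$ is expected total payment when agents report truthfully with $t\sim\mathcal{D}$. With $\gamma>0$, $\phi(\mathbf{q})=\frac12\gamma\|\mathbf{q}\|_2^2$; for agent $k$ (index suppressed): $(P^3)$ maximizes $\sum_iF_i(\sum_jW_{i,j}q_{i,j}-\phi(\mathbf{q}_i))$ s.t. $\sum_jq_{i,j}=1$, $\sum_iF_iq_{i,j}=F_j$, $q_{i,j}\ge0$; $(P^4)$ is the same with $W_{i,j}$ replaced by $\hat W_{i,j}=\max\{W_{i,j},-m(\varepsilon'+2\gamma)-\varepsilon''\}$. KKT conditions for coefficients $V$ at $q$ with multipliers $(\lambda,\mu,\pi)$: $F_i(V_{i,j}-\partial\phi(\mathbf{q}_i)/\partial q_{i,j})=\lambda_{i,j}+\mu_i+F_i\pi_j$, $\lambda_{i,j}\le0$, $\lambda_{i,j}q_{i,j}=0$. RRSF mechanism with parameters $(q^*,\mu^*,\pi^* )$ per agent: agent $k$ reporting $t_k^{(i)}$ is represented by a surrogate $s_k$ with $\Pr[s_k=t_k^{(j)}]=q^*_{i,j}$; $\mathcal{M}$ is run on $s=(s_1,\dots,s_n)$, the outcome is $o\sim x(s)$, and agent $k$ pays $p_k(s)+\hat p_k(t_k^{(i)})$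 with $\hat p_k$ as displayed in the claim. *)

(* Defs.v *)
From mathcomp Require Import all_boot all_order all_algebra.
Set Implicit Arguments. Unset Strict Implicit. Unset Printing Implicit Defensive.
Import Order.TTheory GRing.Theory Num.Theory.
Local Open Scope ring_scope.

Section Defs.
Variable R : realFieldType.

Definition phi (m : nat) (gamma : R) (v : 'I_m -> R) : R :=
  gamma / 2 * \sum_(j < m) v j ^+ 2.

Definition feasible (m : nat) (F : 'I_m -> R) (q : 'I_m -> 'I_m -> R) : Prop :=
  [/\ forall i, \sum_(j < m) q i j = 1,
      forall j, \sum_(i < m) F i * q i j = F j
    & forall i j, 0 <= q i j].

Definition objective (m : nat) (gamma : R) (F : 'I_m -> R)
    (V : 'I_m -> 'I_m -> R) (q : 'I_m -> 'I_m -> R) : R :=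
  \sum_(i < m) F i * (\sum_(j < m) V i j * q i j - phi gamma (q i)).

Definition optimal (m : nat) (gamma : R) (F : 'I_m -> R)
    (V : 'I_m -> 'I_m -> R) (q : 'I_m -> 'I_m -> R) : Prop :=
  feasible F q /\
  forall q', feasible F q' -> objective gamma F V q' <= objective gamma F V q.

Definition What (m : nat) (W : 'I_m -> 'I_m -> R) (c : R) : 'I_m -> 'I_m -> R :=
  fun i j => Num.max (W i j) c.

(* KKT conditions for coefficients V at q with multipliers (lam, mu, pi);
   d phi(q_i) / d q_{i,j} = gamma * q_{i,j}. *)
Definition KKT (m : nat) (gamma : R) (F : 'I_m -> R) (V : 'I_m -> 'I_m -> R)
    (q : 'I_m -> 'I_m -> R) (lam : 'I_m -> 'I_m -> R) (mu pi : 'I_m -> R) : Prop :=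
  forall i j,
    [/\ F i * (V i j - gamma * q i j) = lam i j + mu i + F i * pi j,
        lam i j <= 0
      & lam i j * q i j = 0].

(* minimum over l of f l (the seed i0 only witnesses nonemptiness) *)
Definition minI (m : nat) (f : 'I_m -> R) (i0 : 'I_m) : R :=
  \big[Num.min/f i0]_(l < m) f l.

Definition phat (m : nat) (gamma : R) (F : 'I_m -> R) (q : 'I_m -> 'I_m -> R)
    (mu pi : 'I_m -> R) (i : 'I_m) : R :=
  \sum_(j < m) pi j * q i j + phi gamma (q i) - phi gamma (fun _ : 'I_m => 0)
  + minI (fun l => mu l / F l) i.

(* type profiles: agent k reports (the index of) a type in 'I_(mk k) *)
Definition profile (n : nat) (mk : 'I_n -> nat) : finType :=
  {dffun forall k : 'I_n, 'I_(mk k)}.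

(* a mechanism: outcome distribution (finitely supported, as a list of
   (outcome, weight) pairs) and payments, on each bid profile *)
Record mechanism (n : nat) (mk : 'I_n -> nat) (O : Type) := Mechanism {
  mx : profile mk -> seq (O * R);
  mp : 'I_n -> profile mk -> R }.

Definition profile_prob (n : nat) (mk : 'I_n -> nat)
    (F : forall k : 'I_n, 'I_(mk k) -> R) (t : profile mk) : R :=
  \prod_(k < n) F k (t k).

Definition Rev (n : nat) (mk : 'I_n -> nat) (O : Type)
    (F : forall k : 'I_n, 'I_(mk k) -> R) (M : mechanism mk O) : R :=
  \sum_(t : profile mk) profile_prob F t * \sum_(k < n) mp M k t.

(* probability that the surrogate profile is s when the bid profile is b *)
Definition surrogate_prob (n : nat) (mk : 'I_n -> nat)
    (q : forall k : 'I_n, 'I_(mk k) -> 'I_(mk k) -> R)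
    (b s : profile mk) : R :=
  \prod_(k < n) q k (b k) (s k).

(* RRSF mechanism built on M with parameters (q, mu, pi) per agent.
   Outcome: mixture over surrogate profiles s of x(s).
   Payment: expected payment E_s[p_k(s)] + hat p_k(b_k). *)
Definition RRSF (n : nat) (mk : 'I_n -> nat) (O : Type) (gamma : R)
    (F : forall k : 'I_n, 'I_(mk k) -> R) (M : mechanism mk O)
    (q : forall k : 'I_n, 'I_(mk k) -> 'I_(mk k) -> R)
    (mu pi : forall k : 'I_n, 'I_(mk k) -> R) : mechanism mk O :=
  Mechanism
    (fun b => flatten [seq [seq (ow.1, surrogate_prob q b s * ow.2) | ow <- mx M s]
                      | s <- enum (profile mk)])
    (fun k b => \sum_(s : profile mk) surrogate_prob q b s * mp M k s
                + phat gamma (F k) (q k) (mu k) (pi k) (b k)).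

End Defs.
Arguments mechanism : clear implicits.
Arguments mechanism R [n] mk O.

(* Main.v *)
Require Import Defs.
From mathcomp Require Import all_boot all_order all_algebra.
Import Order.TTheory GRing.Theory Num.Theory.
From mathcomp Require Import lra.
Local Open Scope ring_scope.

Lemma sum_dffun_prod (R : comNzRingType) (I : finType) (T_ : I -> finType)
  (G : forall i, T_ i -> R) :
  \sum_(t : {dffun forall i, T_ i}) \prod_i G i (t i) =
  \prod_i \sum_(x : T_ i) G i x.
Proof.
rewrite (reindex (@dffun_of_fprod I T_)); last first.
  by apply: onW_bij; exact: dffun_of_fprod_bij.
pose P_ := fun i => [ffun x => G i x].
have E : forall i x, G i x = P_ i x by move=> *; rewrite ffunE.
transitivity (\sum_(u : fprod T_) \prod_(i in I) P_ i (u i)).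
  by apply: eq_bigr => u _; apply: eq_bigr => i _; rewrite ffunE E.
rewrite big_fprod; symmetry.
transitivity (\prod_i \sum_(j in tagged_with T_ i) untag 0 (P_ i) j).
  apply: eq_bigr => i _; rewrite -(big_tag (fun i x => P_ i x)).
  by apply: eq_bigr => x _; rewrite ffunE.
rewrite bigA_distr_big_dep.
by apply: eq_bigl.
Qed.

Lemma agent_bound (R : realFieldType) (m : nat) (F : 'I_m -> R)
  (HF : forall i, 0 < F i) (gamma : R) (Hg : 0 < gamma)
  (V q lam : 'I_m -> 'I_m -> R) (mu pi : 'I_m -> R) (c : R)
  (HV : forall i j, c <= V i j) :
  feasible F q -> KKT gamma F V q lam mu pi ->
  forall i, c - gamma <= phat gamma F q mu pi i.
Proof.
move=> [Hrow Hcol Hpos] HK i.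
have q1 : forall l j, q l j <= 1.
  move=> l j; rewrite -(Hrow l) (bigD1 j) //= lerDl.
  by apply: sumr_ge0 => k _; exact: Hpos.
have Hl : forall l, c - gamma <= \sum_(j < m) pi j * q i j + mu l / F l.
  move=> l.
  have -> : \sum_(j < m) pi j * q i j + mu l / F l =
            \sum_(j < m) q i j * (pi j + mu l / F l).
    rewrite -[mu l / F l]mul1r -{1}(Hrow i) mulr_suml -big_split /=.
    by apply: eq_bigr => j _; rewrite mul1r mulrDr [q i j * pi j]mulrC.
  rewrite -[c - gamma]mul1r -{1}(Hrow i) mulr_suml.
  apply: ler_sum => j _; apply: ler_wpM2l; first exact: Hpos.
  have [H1 H2 _] := HK l j.
  have H3 : F l * (V l j - gamma * q l j) <= mu l + F l * pi j.
    by rewrite H1 -addrA -[X in _ <= X]add0r lerD2r.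
  have H4 : V l j - gamma * q l j <= pi j + mu l / F l.
    rewrite -(ler_pM2l (HF l)) (mulrDr (F l) (pi j)) mulrCA divff ?gt_eqF // mulr1.

    by rewrite [F l * pi j + _]addrC.
  apply: le_trans H4; apply: lerD; first exact: HV.
  rewrite lerN2 -{2}[gamma]mulr1; apply: ler_wpM2l; [exact: ltW | exact: q1].
set S := \sum_(j < m) pi j * q i j.
have P0 : phi gamma (fun _ : 'I_m => 0) = 0.
  by rewrite /phi big1 ?mulr0 // => j _; rewrite expr2 mulr0.
have Pq : 0 <= phi gamma (q i).
  rewrite /phi; apply: mulr_ge0; first by apply: divr_ge0; [exact: ltW|].
  by apply: sumr_ge0 => j _; exact: sqr_ge0.
have Hm : c - gamma - S <= minI (fun l => mu l / F l) i.
  rewrite /minI; apply: (big_ind (fun x => c - gamma - S <= x)).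
  - by rewrite /= lerBlDr [_ + S]addrC /S; exact: Hl.
  - by move=> x y hx hy; rewrite le_min hx hy.
  - by move=> l _; rewrite /= lerBlDr [_ + S]addrC /S; exact: Hl.
rewrite /phat -/S P0; lra.
Qed.

Theorem mainTheorem13 (R : realFieldType) (n : nat) (mk : 'I_n -> nat)
    (O : Type)
    (F : forall k : 'I_n, 'I_(mk k) -> R)
    (HFpos : forall k i, 0 < F k i)
    (HFsum : forall k, \sum_(i < mk k) F k i = 1)
    (gamma : R) (Hgamma : 0 < gamma)
    (M : mechanism R mk O)
    (W : forall k : 'I_n, 'I_(mk k) -> 'I_(mk k) -> R)
    (HW : forall k i j, -1 <= W k i j <= 1)
    (eps1 eps2 : R) (Heps : 0 <= eps2 <= eps1)
    (Hdiag : forall k i j, Num.max (W k i j - eps1) (- eps2) <= W k i i)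
    (qh : forall k : 'I_n, 'I_(mk k) -> 'I_(mk k) -> R)
    (lamh : forall k : 'I_n, 'I_(mk k) -> 'I_(mk k) -> R)
    (muh pih : forall k : 'I_n, 'I_(mk k) -> R) :
  let m := \max_(k < n) mk k in
  let c := - (m%:R * (eps1 + 2 * gamma)) - eps2 in
  (forall k, optimal gamma (F k) (What (W k) c) (qh k)) ->
  (forall k, KKT gamma (F k) (What (W k) c) (qh k) (lamh k) (muh k) (pih k)) ->
  (forall k i, phat gamma (F k) (qh k) (muh k) (pih k) i >= c - gamma)
  /\ Rev F (RRSF gamma F M qh muh pih) >= Rev F M + n%:R * (c - gamma).
Proof.
move=> m c Hopt HKKT.
have HV : forall k i j, c <= What (W k) c i j.
  by move=> k i j; rewrite /What le_max lexx orbT.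
have Hph : forall k i, c - gamma <= phat gamma (F k) (qh k) (muh k) (pih k) i.
  move=> k; apply: agent_bound; [exact: HFpos|exact: Hgamma|exact: HV|exact: (Hopt k).1|exact: HKKT].
split => //.
set P := profile_prob F.
have HP0 : forall t, 0 <= P t.
  by move=> t; rewrite /P /profile_prob; apply: prodr_ge0 => k _; exact: ltW.
have HP1 : \sum_(t : profile mk) P t = 1.
  rewrite /P /profile_prob /profile sum_dffun_prod.
  by apply: big1 => k _; exact: HFsum.
have HPs : forall s : profile mk,
    \sum_(t : profile mk) P t * surrogate_prob qh t s = P s.
  move=> s; rewrite /P /profile_prob /surrogate_prob.
  under eq_bigr => t _ do rewrite -big_split /=.
  rewrite /profile (@sum_dffun_prod R _ (fun k => 'I_(mk k)) (fun k (x : 'I_(mk k)) => F k x * qh k x (s k))); apply: eq_bigr => k _.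
  by have [_ Hc _] := (Hopt k).1; exact: Hc.
rewrite /Rev /=.
apply: le_trans (_ : _ <= \sum_(t : profile mk) P t *
   \sum_(k < n) (\sum_(s : profile mk) surrogate_prob qh t s * mp M k s
      + (c - gamma))) _; last first.
  apply: ler_sum => t _; apply: ler_wpM2l; first exact: HP0.
  by apply: ler_sum => k _; rewrite lerD2l.
rewrite le_eqVlt; apply/orP; left; apply/eqP; symmetry.
transitivity (\sum_(t : profile mk) (P t * \sum_(k < n) \sum_(s : profile mk)
   surrogate_prob qh t s * mp M k s + P t * (n%:R * (c - gamma)))).
  by apply: eq_bigr => t _; rewrite big_split /= sumr_const card_ord mulrDr mulr_natl.
rewrite big_split /= -mulr_suml HP1 mul1r; congr (_ + _).
transitivity (\sum_(t : profile mk) \sum_(s : profile mk)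
    P t * surrogate_prob qh t s * \sum_(k < n) mp M k s).
  apply: eq_bigr => t _; rewrite exchange_big mulr_sumr; apply: eq_bigr => s _.
  by rewrite -mulrA -mulr_sumr.
rewrite exchange_big; apply: eq_bigr => s _.
by rewrite -mulr_suml HPs.
Qed.
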